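(* Let $d,k\ge 1$, let $\pi(a|s)$ be a policy on actions $a\in\{0,\dots,k-1\}$ and states $s\in\{1,\dots,d\}$, and let $M=(M^a)_{a}$ be a family of nonnegative $d\times d$ matrices with $M^a_{s+}:=\sum_{s'}M^a_{ss'}=\pi(a|s)$ for all $a,s$, and such that $M^+:=\sum_a M^a$ has all entries strictly positive. Then the following are equivalent: (1) every family $W=(W^a)_a$ of nonnegative $d\times d$ matrices with $W^a_{s+}=\pi(a|s)$ for all $a,s$, with $W^+:=\sum_a W^a$ entrywise strictly positive, and with $M^a\oslash M^+=W^a\oslash W^+$ for all $a$, satisfies $W=M$; (2) for every state $s$, the $k\times d$ matrix $(M^a_{ss'})_{a,s'}$ has rank $\ge d$ (i.e. rank $d$).
   Context: $M^a_{ss'}$ is interpreted as $\pi(a|s)\,p(s'|s,a)$ for a controlled Markov process, so $B^a:=M^a\oslash M^+$ is the inverse model $p(a|s,s')$. Here $\oslash$ denotes entrywise division of matrices, $[A\oslash B]_{ss'}=A_{ss'}/B_{ss'}$. *)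

(* Defs.v *)
From mathcomp Require Import all_boot all_order all_algebra.
Set Implicit Arguments. Unset Strict Implicit. Unset Printing Implicit Defensive.
Import Order.TTheory GRing.Theory Num.Theory.
Local Open Scope ring_scope.

Definition rowsum (R : realFieldType) (d : nat) (A : 'M[R]_d) (s : 'I_d) : R :=
  \sum_(s' < d) A s s'.

Definition mplus (R : realFieldType) (k d : nat) (M : 'I_k -> 'M[R]_d) : 'M[R]_d :=
  \sum_(a < k) M a.

Definition mxediv (R : realFieldType) (d : nat) (A B : 'M[R]_d) : 'M[R]_d :=
  \matrix_(i, j) (A i j / B i j).

Definition state_mx (R : realFieldType) (k d : nat) (M : 'I_k -> 'M[R]_d) (s : 'I_d)
  : 'M[R]_(k, d) := \matrix_(a, s') M a s s'.

Definition admissible (R : realFieldType) (k d : nat) (pi : 'I_k -> 'I_d -> R)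
  (M : 'I_k -> 'M[R]_d) : Prop :=
  [/\ (forall a i j, 0 <= M a i j),
      (forall a s, rowsum (M a) s = pi a s) &
      (forall i j, 0 < mplus M i j)].

(* Main.v *)
Require Import Defs.
From mathcomp Require Import all_boot all_order all_algebra.
From mathcomp Require Import lra.
From Stdlib Require Import FunctionalExtensionality.
Import Order.TTheory GRing.Theory Num.Theory.
Local Open Scope ring_scope.

Lemma rank_full_iff (F : fieldType) (k d : nat) (A : 'M[F]_(k, d)) :
  (d <= \rank A)%N <-> (forall u : 'rV[F]_d, u *m A^T = 0 -> u = 0).
Proof.
split.
- move=> hr u hu.
  have hf : row_free A^T.
    rewrite /row_free mxrank_tr eqn_leq hr andbT.
    by rewrite -mxrank_tr rank_leq_row.
  by apply/eqP; rewrite -(mulmx_free_eq0 _ hf) hu.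
- move=> hu; have := inj_row_free hu.
  by rewrite /row_free mxrank_tr => /eqP ->.
Qed.

Lemma mulmx_trE (R : realFieldType) (k d : nat) (M : 'I_k -> 'M[R]_d) s
  (u : 'rV[R]_d) a :
  (u *m (state_mx M s)^T) 0 a = \sum_j u 0 j * M a s j.
Proof. by rewrite mxE; apply: eq_bigr => j _; rewrite !mxE. Qed.

Lemma mplusE (R : realFieldType) (k d : nat) (M : 'I_k -> 'M[R]_d) i j :
  mplus M i j = \sum_a M a i j.
Proof. by rewrite /mplus summxE. Qed.

Theorem proposition1 (R : realFieldType) (d k : nat)
  (hd : (1 <= d)%N) (hk : (1 <= k)%N)
  (pi : 'I_k -> 'I_d -> R)
  (hpi0 : forall a s, 0 <= pi a s)
  (hpi1 : forall s, \sum_(a < k) pi a s = 1)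
  (M : 'I_k -> 'M[R]_d)
  (hM : admissible pi M) :
  (forall W : 'I_k -> 'M[R]_d,
     admissible pi W ->
     (forall a, mxediv (M a) (mplus M) = mxediv (W a) (mplus W)) ->
     W = M)
  <-> (forall s : 'I_d, (d <= \rank (state_mx M s))%N).
Proof.
case: hM => hM0 hMr hMp.
have key : forall s, (forall u : 'rV[R]_d,
    (forall a, \sum_j u 0 j * M a s j = 0) -> u = 0) <->
    (d <= \rank (state_mx M s))%N.
  move=> s; split.
  - move=> H; apply/rank_full_iff => u hu; apply: H.
    by move=> a; rewrite -mulmx_trE hu mxE.
  - move/rank_full_iff => H u hu; apply: H.
    by apply/rowP => a; rewrite mulmx_trE hu mxE.
split.
- move=> H1 s; apply/key => u hu.
  pose S := 1 + \sum_j `|u 0 j|.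
  have S0 : 0 < S.
    by rewrite /S ltr_pwDl // sumr_ge0 // => j _.
  pose c j := 1 + u 0 j / S.
  have c0 : forall j, 0 < c j.
    move=> j.
    have hlt : `|u 0 j| < S.
      rewrite /S (bigD1 j) //=.
      have : 0 <= \sum_(i | i != j) `|u 0 i| by rewrite sumr_ge0.
      have := normr_ge0 (u 0 j).
      lra.
    have : 0 < S + u 0 j.
      by move: hlt; rewrite ltr_norml => /andP[h _]; rewrite -ltrBlDl sub0r.
    move=> h; have -> : c j = (S + u 0 j) / S.
      by rewrite /c mulrDl divff // gt_eqF.
    by rewrite divr_gt0.
  pose W := fun a => \matrix_(i, j) (if i == s then M a i j * c j else M a i j).
  have hWp : forall i j, mplus W i j =
      (if i == s then mplus M i j * c j else mplus M i j).
    move=> i j; rewrite !mplusE; case: (eqVneq i s) => [->|hi].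
      by rewrite mulr_suml; apply: eq_bigr => a _; rewrite mxE eqxx.
    by apply: eq_bigr => a _; rewrite mxE (negbTE hi).
  have hW : admissible pi W.
    split.
    - move=> a i j; rewrite mxE; case: eqP => _ //.
      by rewrite mulr_ge0 // ltW.
    - move=> a i; rewrite -hMr /rowsum; case: (eqVneq i s) => [->|hi].
        under eq_bigr => j _ do rewrite mxE eqxx /c mulrDr mulr1.
        rewrite big_split /=.
        have -> : \sum_j M a s j * (u 0 j / S) = 0.
          transitivity ((\sum_j u 0 j * M a s j) / S); last by rewrite hu mul0r.
          rewrite mulr_suml.
          by apply: eq_bigr => j _; rewrite mulrA [M a s j * _]mulrC.
        by rewrite addr0.
      by apply: eq_bigr => j _; rewrite mxE (negbTE hi).
    - move=> i j; rewrite hWp; case: eqP => _ //.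
      by rewrite mulr_gt0.
  have hr : forall a, mxediv (M a) (mplus M) = mxediv (W a) (mplus W).
    move=> a; apply/matrixP => i j; rewrite !mxE hWp; case: eqP => _ //.
    rewrite invfM mulrA -[M a i j * c j * _]mulrA [c j * _]mulrC.
    by rewrite !mulrA mulfK // gt_eqF.
  have hWM := H1 W hW hr.
  apply/rowP => j; rewrite mxE.
  have h1 : forall a, M a s j * (u 0 j / S) = 0.
    move=> a; have := congr1 (fun F : 'I_k -> 'M[R]_d => F a s j) hWM; rewrite /= /W mxE eqxx.
    rewrite /c mulrDr mulr1 => /eqP; rewrite -subr_eq0 addrAC subrr add0r.
    by move/eqP.
  have : mplus M s j * (u 0 j / S) = 0.
    by rewrite mplusE mulr_suml big1.
  move/eqP; rewrite mulf_eq0 (gt_eqF (hMp s j)) /= mulf_eq0 invr_eq0 (gt_eqF S0) orbF.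
  by move/eqP.
- move=> H2 W hW hr; case: hW => hW0 hWr hWp.
  have e : forall a i j, W a i j = M a i j * (mplus W i j / mplus M i j).
    move=> a i j; have := congr1 (fun A : 'M[R]_d => A i j) (hr a); rewrite !mxE => h.
    by rewrite mulrCA h mulrCA mulfV ?mulr1 // gt_eqF.
  have hv : forall i, (\row_j (mplus W i j / mplus M i j - 1)) = 0 :> 'rV[R]_d.
    move=> i; apply: (proj2 (key i) (H2 i)) => a.
    under eq_bigr => j _ do rewrite mxE mulrBl mul1r (mulrC (_ / _)) -e.
    rewrite sumrB; have := hWr a i; have := hMr a i; rewrite /rowsum => -> ->.
    by rewrite subrr.
  apply: functional_extensionality => a; apply/matrixP => i j.
  have := congr1 (fun v : 'rV[R]_d => v 0 j) (hv i); rewrite !mxE => /eqP.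
  by rewrite subr_eq0 => /eqP h; rewrite e h mulr1.
Qed.
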